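(* Let $M$ nodes with capacities $C_1,\dots,C_M>0$ and $N$ classes with fixed loop-free routes be given as in the context, with external rates $r_n>0$ and mean loads $\rho_n>0$. For every $J\in\mathbb{Z}_+^N$, the system of equations \[ r^{n,J}_m=\begin{cases}0 & n\notin\mathcal{N}_m\\ r_n & p^n(m)=0\\ r^{n,J}_{p^n(m)}S^J_{p^n(m)} & \text{otherwise},\end{cases}\qquad \rho^{n,J}_m=\begin{cases}0 & n\notin\mathcal{N}_m\\ \rho_n & p^n(m)=0\\ \rho^{n,J}_{p^n(m)}S^J_{p^n(m)} & \text{otherwise},\end{cases} \] with \[ S^J_m=\frac{C_m}{\max\{C_m,\ \sum_{n\in\mathcal{N}_m}(J_n r^{n,J}_m+\rho^{n,J}_m)\}}, \] has a unique solution $(r^{n,J}_m,\rho^{n,J}_m)_{n,m}$. Furthermore, for fixed $J$, $r^{n,J}_m$ and $\rho^{n,J}_m$ are continuous functions of the parameters $(r_n)_n$ and $(\rho_n)_n$.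
   Context: Class $n\in\{1,\dots,N\}$ follows a fixed route $\pi^n=[\pi^n_1,\dots,\pi^n_{l_n}]$ of pairwise distinct nodes in $\{1,\dots,M\}$ (loop-free route). $\mathcal{N}_m=\{n:\pi^n_i=m\text{ for some }i\}$ is the set of classes passing through node $m$. For $n\in\mathcal{N}_m$, $p^n(m)=\pi^n_{i-1}$ if $m=\pi^n_i$ with $i\ge2$, and $p^n(m)=0$ if $m=\pi^n_1$. The network as a whole need not be feedforward. *)

(* Defs.v *)
From mathcomp Require Import all_boot all_order all_algebra.
From mathcomp Require Import reals.
Set Implicit Arguments. Unset Strict Implicit. Unset Printing Implicit Defensive.
Import Order.TTheory GRing.Theory Num.Theory.
Local Open Scope ring_scope.

(* Nodes are 'I_M (node m+1 of the paper is m), classes are 'I_N.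
   route n : seq 'I_M is the route pi^n of class n (list of distinct nodes).
   n \in N_m  <->  m \in route n. *)

(* p^n(m): predecessor of m on route n; None encodes p^n(m) = 0
   (m is the first node of the route). Only meaningful when m \in route n. *)
Definition prev_node (M N : nat) (route : 'I_N -> seq 'I_M) (n : 'I_N) (m : 'I_M)
  : option 'I_M :=
  if index m (route n) is k.+1 then Some (nth m (route n) k) else None.

Definition Sfac (R : realType) (M N : nat) (C : 'I_M -> R)
  (route : 'I_N -> seq 'I_M) (J : 'I_N -> nat)
  (r rho : 'I_N -> 'I_M -> R) (m : 'I_M) : R :=
  C m / Num.max (C m) (\sum_(n < N | m \in route n) ((J n)%:R * r n m + rho n m)).

Definition flow_rhs (R : realType) (M N : nat) (route : 'I_N -> seq 'I_M)
  (ext : 'I_N -> R) (x : 'I_N -> 'I_M -> R) (S : 'I_M -> R)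
  (n : 'I_N) (m : 'I_M) : R :=
  if m \in route n then
    match prev_node route n m with
    | None => ext n
    | Some p => x n p * S p
    end
  else 0.

Definition is_solution (R : realType) (M N : nat) (C : 'I_M -> R)
  (route : 'I_N -> seq 'I_M) (J : 'I_N -> nat) (rn rhon : 'I_N -> R)
  (r rho : 'I_N -> 'I_M -> R) : Prop :=
  forall n m,
    r n m = flow_rhs route rn r (Sfac C route J r rho) n m /\
    rho n m = flow_rhs route rhon rho (Sfac C route J r rho) n m.

(* Main.v *)
Require Import Defs.
From mathcomp Require Import all_boot all_order all_algebra.
From mathcomp Require Import ring lra.
From mathcomp Require Import boolp classical_sets reals exp topology normedtype.
Import Order.TTheory GRing.Theory Num.Theory.
Import numFieldNormedType.Exports.
Local Open Scope ring_scope.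

Section Aux.
Context {R : realType}.
Lemma ln_le_sub1 {t : R} : 0 < t -> ln t <= t - 1.
Proof.
move=> t0. have := @le_ln1Dx R (t - 1).
have -> : 1 + (t - 1) = t by ring.
apply; lra.
Qed.
Lemma ln_lt_sub1 {t : R} : 0 < t -> t != 1 -> ln t < t - 1.
Proof.
move=> t0 t1. set u := Num.sqrt t.
have u0 : 0 < u by rewrite sqrtr_gt0.
have tu : t = u * u by rewrite -expr2 sqr_sqrtr ?ltW.
have lnt : ln t = ln u + ln u by rewrite tu lnM // posrE.
have u1 : u != 1 by apply: contraNneq t1 => u1; rewrite tu u1 mulr1.
have h1 := ln_le_sub1 u0.
have h2 : 0 < (u - 1) ^+ 2 by rewrite exprn_even_gt0 //= subr_eq0.
rewrite lnt tu; rewrite expr2 in h2; nra.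
Qed.

Definition Psi (a b : R) := a - b - b * (ln a - ln b).

Lemma Psi_ge0 {a b : R} : 0 < a -> 0 < b -> 0 <= Psi a b.
Proof.
move=> a0 b0; rewrite /Psi -ln_div ?posrE //.
have h := ln_le_sub1 (divr_gt0 a0 b0).
have : b * ln (a / b) <= b * (a / b - 1) by rewrite ler_pM2l.
have -> : b * (a / b - 1) = a - b by field; rewrite gt_eqF.
lra.
Qed.

Lemma x_ln_le {x y : R} : 0 < x -> 0 < y -> x * (ln y - ln x) <= y - x.
Proof.
move=> x0 y0; rewrite -ln_div ?posrE //.
have h := ln_le_sub1 (divr_gt0 y0 x0).
have : x * ln (y / x) <= x * (y / x - 1) by rewrite ler_pM2l.
have -> : x * (y / x - 1) = y - x by field; rewrite gt_eqF.
lra.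
Qed.

Lemma x_ln_lt {x y : R} : 0 < x -> 0 < y -> x != y -> x * (ln y - ln x) < y - x.
Proof.
move=> x0 y0 xy; rewrite -ln_div ?posrE //.
have yx1 : y / x != 1.
  apply: contraNneq xy => h. have : y = x by rewrite -[y](divfK (lt0r_neq0 x0)) h mul1r.
  by move=> ->.
have h := ln_lt_sub1 (divr_gt0 y0 x0) yx1.
have : x * ln (y / x) < x * (y / x - 1) by rewrite ltr_pM2l.
have -> : x * (y / x - 1) = y - x by field; rewrite gt_eqF.
lra.
Qed.

Lemma step_ident {a b x y : R} : 0 < a -> 0 < b -> 0 < x -> 0 < y ->
  Psi a b - Psi (a * x) (b * y) - (ln y - ln x) * (a * x - b * y)
  = (1 - y) * Psi a b + a * ((y - x) - x * (ln y - ln x)).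
Proof.
move=> a0 b0 x0 y0; rewrite /Psi !lnM ?posrE //; ring.
Qed.

Lemma step_le {a b x y : R} : 0 < a -> 0 < b -> 0 < x <= 1 -> 0 < y <= 1 ->
  (ln y - ln x) * (a * x - b * y) + Psi (a * x) (b * y) <= Psi a b.
Proof.
move=> a0 b0 /andP[x0 x1] /andP[y0 y1].
have e := step_ident a0 b0 x0 y0.
have h1 := Psi_ge0 a0 b0. have h2 := x_ln_le x0 y0.
have h3 : 0 <= (1 - y) * Psi a b by rewrite mulr_ge0 // subr_ge0.
have h4 : 0 <= a * ((y - x) - x * (ln y - ln x)) by apply: mulr_ge0; [exact: ltW | rewrite subr_ge0].
lra.
Qed.

Lemma step_lt {a b x y : R} : 0 < a -> 0 < b -> 0 < x <= 1 -> 0 < y <= 1 -> x != y ->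
  (ln y - ln x) * (a * x - b * y) + Psi (a * x) (b * y) < Psi a b.
Proof.
move=> a0 b0 /andP[x0 x1] /andP[y0 y1] xy.
have e := step_ident a0 b0 x0 y0.
have h1 := Psi_ge0 a0 b0. have h2 := x_ln_lt x0 y0 xy.
have h3 : 0 <= (1 - y) * Psi a b by rewrite mulr_ge0 // subr_ge0.
have h4 : 0 < a * ((y - x) - x * (ln y - ln x)) by apply: mulr_gt0; [exact: a0 | rewrite subr_gt0].
lra.
Qed.
End Aux.
Section Net.
Variables (R : realType) (M N : nat) (C : 'I_M -> R) (route : 'I_N -> seq 'I_M).
Hypothesis Cpos : forall m, 0 < C m.
Hypothesis Huniq : forall n, uniq (route n).

Definition pre n m := take (index m (route n)) (route n).
Definition pp (S : 'I_M -> R) n m := \prod_(k <- pre n m) S k.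
Definition load (w : 'I_N -> R) (S : 'I_M -> R) m :=
  \sum_(n < N | m \in route n) w n * pp S n m.
Definition unit01 (S : 'I_M -> R) := forall m, 0 < S m <= 1.
Definition validw (w : 'I_N -> R) := forall n, 0 < w n.

Lemma prod01 (S : 'I_M -> R) (l : seq 'I_M) : unit01 S ->
  0 < \prod_(k <- l) S k <= 1.
Proof.
move=> HS; elim: l => [|k l IH]; first by rewrite big_nil ltr01 lexx.
rewrite big_cons; case/andP: IH => h1 h2; case/andP: (HS k) => h3 h4.
by rewrite mulr_gt0 //= mulr_ile1 // ltW.
Qed.

Lemma pp01 {S} n m : unit01 S -> 0 < pp S n m <= 1.
Proof. exact: prod01. Qed.

Lemma load_ge0 w S m : validw w -> unit01 S -> 0 <= load w S m.
Proof.
move=> Hw HS; apply: sumr_ge0 => n _; case/andP: (pp01 n m HS) => h1 _.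
by rewrite mulr_ge0 // ltW.
Qed.

Lemma load_le w S m : validw w -> unit01 S -> load w S m <= \sum_n w n.
Proof.
move=> Hw HS; apply: (le_trans (y := \sum_(n < N | m \in route n) w n)).
  apply: ler_sum => n _; case/andP: (pp01 n m HS) => h1 h2.
  by rewrite ler_piMr // ltW.
by rewrite [X in _ <= X](bigID (fun n => m \in route n)) /= lerDl sumr_ge0 // => n _; rewrite ltW.
Qed.

Fixpoint tsum (S S' : 'I_M -> R) (l : seq 'I_M) (a b : R) : R :=
  if l is k :: l' then
    (ln (S' k) - ln (S k)) * (a * S k - b * S' k) + tsum S S' l' (a * S k) (b * S' k)
  else 0.

Lemma tsum_le {S S'} l {a b} : unit01 S -> unit01 S' -> 0 < a -> 0 < b ->
  tsum S S' l a b <= Psi a b.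
Proof.
move=> HS HS'; elim: l a b => [|k l IH] a b a0 b0 /=; first exact: Psi_ge0.
have := step_le a0 b0 (HS k) (HS' k).
case/andP: (HS k) => h1 _; case/andP: (HS' k) => h2 _.
have := IH (a * S k) (b * S' k) (mulr_gt0 a0 h1) (mulr_gt0 b0 h2).
lra.
Qed.

Lemma tsum_lt {S S' l a b} : unit01 S -> unit01 S' -> 0 < a -> 0 < b ->
  has (fun k => S k != S' k) l -> tsum S S' l a b < Psi a b.
Proof.
move=> HS HS'; elim: l a b => [|k l IH] a b a0 b0 //= /orP[hk|hl].
  have := step_lt a0 b0 (HS k) (HS' k) hk.
  case/andP: (HS k) => h1 _; case/andP: (HS' k) => h2 _.
  have := tsum_le l HS HS' (mulr_gt0 a0 h1) (mulr_gt0 b0 h2).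
  lra.
have := step_le a0 b0 (HS k) (HS' k).
case/andP: (HS k) => h1 _; case/andP: (HS' k) => h2 _.
have := IH (a * S k) (b * S' k) (mulr_gt0 a0 h1) (mulr_gt0 b0 h2) hl.
lra.
Qed.

Lemma tsum_seq S S' (l : seq 'I_M) a b : uniq l ->
  \sum_(m <- l) (ln (S' m) - ln (S m)) *
     (a * \prod_(k <- take (index m l) l) S k * S m
      - b * \prod_(k <- take (index m l) l) S' k * S' m)
  = tsum S S' l a b.
Proof.
elim: l a b => [|x l IH] a b; first by rewrite big_nil.
rewrite cons_uniq => /andP[xl ul] /=.
rewrite big_cons /= eqxx /= !big_nil !mulr1.
congr (_ + _); rewrite -IH //.
apply: eq_big_seq => m ml.
have mx : (x == m) = false by apply/negbTE; apply: contraNneq xl => ->.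
by rewrite mx /= !big_cons !mulrA.
Qed.

Definition Dterm w (S S' : 'I_M -> R) m :=
  (ln (S' m) - ln (S m)) * (S m * load w S m - S' m * load w S' m).

Lemma Dsum_eq w S S' :
  \sum_m Dterm w S S' m = \sum_n tsum S S' (route n) (w n) (w n).
Proof.
rewrite /Dterm /load.
transitivity (\sum_m \sum_(n < N | m \in route n)
   (ln (S' m) - ln (S m)) * (w n * pp S n m * S m - w n * pp S' n m * S' m)).
  by apply: eq_bigr => m _; rewrite (mulrC (S m)) (mulrC (S' m)) !mulr_suml -sumrB mulr_sumr.
rewrite (exchange_big_dep xpredT) //=; apply: eq_bigr => n _.
by rewrite -tsum_seq //; rewrite [RHS]big_uniq //=.
Qed.

Lemma key_le {w S S'} : validw w -> unit01 S -> unit01 S' ->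
  \sum_m Dterm w S S' m <= 0.
Proof.
move=> Hw HS HS'; rewrite Dsum_eq; apply: sumr_le0 => n _.
have := tsum_le (route n) HS HS' (Hw n) (Hw n).
by rewrite /Psi !subrr mulr0 subr0.
Qed.

Lemma key_lt {w S S'} : validw w -> unit01 S -> unit01 S' ->
  (exists n m, m \in route n /\ S m != S' m) ->
  \sum_m Dterm w S S' m < 0.
Proof.
move=> Hw HS HS' [n0 [m0 [hm hne]]]; rewrite Dsum_eq (bigD1 n0) //=.
have h1 : tsum S S' (route n0) (w n0) (w n0) < 0.
  have := tsum_lt HS HS' (Hw n0) (Hw n0) (introT hasP (ex_intro2 _ _ m0 hm hne)).
  by rewrite /Psi !subrr mulr0 subr0.
have h2 : \sum_(n | n != n0) tsum S S' (route n) (w n) (w n) <= 0.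
  apply: sumr_le0 => n _; have := tsum_le (route n) HS HS' (Hw n) (Hw n).
  by rewrite /Psi !subrr mulr0 subr0.
lra.
Qed.


Definition phi (c L : R) := c / Num.max c L.

Lemma maxrl (x y : R) : y <= x -> Num.max x y = x.
Proof. by rewrite /Num.max => h; rewrite ltNge h. Qed.
Lemma maxrr (x y : R) : x <= y -> Num.max x y = y.
Proof. rewrite /Num.max le_eqVlt => /orP[/eqP->|->] //; by rewrite ltxx. Qed.

Lemma maxc_gt0 {c : R} (L : R) : 0 < c -> 0 < Num.max c L.
Proof. by move=> c0; apply: (lt_le_trans c0); rewrite le_max lexx. Qed.

Lemma phi01 (c L : R) : 0 < c -> 0 < phi c L <= 1.
Proof.
move=> c0; have m0 := maxc_gt0 L c0.
rewrite /phi divr_gt0 //= ler_pdivrMr // mul1r le_max lexx //.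
Qed.

Lemma phi_mul_le (c L : R) : 0 < c -> phi c L * L <= c.
Proof.
move=> c0; have m0 := maxc_gt0 L c0.
by rewrite /phi mulrAC ler_pdivrMr // ler_pM2l // le_max lexx orbT.
Qed.

Lemma phi_mul_eq (c L : R) : 0 < c -> phi c L < 1 -> phi c L * L = c.
Proof.
move=> c0; rewrite /phi; have [h|h] := leP L c.
  by rewrite mulfV ?ltxx // gt_eqF.
have L0 : 0 < L := lt_trans c0 h.
by move=> _; field; rewrite gt_eqF.
Qed.

Lemma maxrlip (c L L0 : R) : `|Num.max c L - Num.max c L0| <= `|L - L0|.
Proof.
have [h1|h1] := leP L c; have [h2|h2] := leP L0 c.
- by rewrite subrr normr0.
- rewrite distrC (distrC L) !ger0_norm; lra.
- rewrite !ger0_norm; lra.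
- by [].
Qed.

Lemma phi_lip (c L L0 : R) : 0 < c -> `|phi c L - phi c L0| <= `|L - L0| / c.
Proof.
move=> c0; rewrite /phi.
set a := Num.max c L; set b := Num.max c L0.
have ac : c <= a by rewrite le_max lexx.
have bc : c <= b by rewrite le_max lexx.
have a0 : 0 < a := lt_le_trans c0 ac. have b0 : 0 < b := lt_le_trans c0 bc.
have -> : c / a - c / b = c * (b - a) / (a * b) by field; rewrite ?gt_eqF.
rewrite -mulrA normrM gtr0_norm // normrM normfV (gtr0_norm (mulr_gt0 a0 b0)).
have hab := maxrlip c L L0.
have key : c / (a * b) <= c^-1.
  rewrite -subr_le0.
  have -> : c / (a * b) - c^-1 = (c * c - a * b) * (c * (a * b))^-1 by field; rewrite ?gt_eqF.
  apply: mulr_le0_ge0; last by rewrite invr_ge0 mulr_ge0 ?mulr_ge0 ?ltW.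
  by rewrite subr_le0 ler_pM // ltW.
have h1 : `|b - a| <= `|L - L0| by rewrite distrC.
have h3 : 0 <= `|b - a| := normr_ge0 _.
have -> : c * (`|b - a| * (a * b)^-1) = `|b - a| * (c / (a * b)) by rewrite mulrCA.
apply: (le_trans (y := `|b - a| * c^-1)); first by rewrite ler_wpM2l.
by rewrite ler_wpM2r // invr_ge0 ltW.
Qed.

Definition valids (s : 'I_M -> R) := forall m, 0 < s m <= 1.

Definition fixedF (F : {set 'I_M}) w (sg S : 'I_M -> R) :=
  forall m, S m = if m \in F then phi (C m) (load w S m) else sg m.

Lemma fixed_unit {F : {set 'I_M}} {w : 'I_N -> R} {sg S : 'I_M -> R} : valids sg -> fixedF F w sg S -> unit01 S.
Proof. by move=> Hs HF m; rewrite HF; case: ifP => _; [exact: phi01|exact: Hs]. Qed.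

Lemma fixed_term {F : {set 'I_M}} {w : 'I_N -> R} {sg sg' S S' : 'I_M -> R} {m : 'I_M} : validw w -> unit01 S -> unit01 S' ->
  m \in F -> fixedF F w sg S -> fixedF F w sg' S' -> 0 <= Dterm w S S' m.
Proof.
move=> Hw HS HS' mF HF HF'; rewrite /Dterm.
have eS := HF m; have eS' := HF' m; rewrite mF in eS eS'.
case/andP: (HS m) => s0 s1; case/andP: (HS' m) => t0 t1.
have c0 := Cpos m.
case: (ltgtP (S m) (S' m)) => h.
- have e1 : S m * load w S m = C m by rewrite eS phi_mul_eq -?eS //; apply: lt_le_trans h t1.
  have e2 : S' m * load w S' m <= C m by rewrite eS' phi_mul_le.
  apply: mulr_ge0; first by rewrite subr_ge0 ler_ln ?posrE // ltW.
  by rewrite e1 subr_ge0.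
- have e1 : S' m * load w S' m = C m by rewrite eS' phi_mul_eq -?eS' //; apply: lt_le_trans h s1.
  have e2 : S m * load w S m <= C m by rewrite eS phi_mul_le.
  apply: mulr_le0; first by rewrite subr_le0 ler_ln ?posrE // ltW.
  by rewrite e1 subr_le0.
- by rewrite h subrr mul0r.
Qed.

Lemma unused_load (w : 'I_N -> R) (S : 'I_M -> R) (m : 'I_M) : (forall n, m \notin route n) -> load w S m = 0.
Proof. by move=> h; rewrite /load big_pred0 // => n; apply/negbTE. Qed.

Lemma fixed_unique (w : 'I_N -> R) (sg sg' S S' : 'I_M -> R) : validw w -> valids sg -> valids sg' ->
  fixedF [set: 'I_M]%SET w sg S -> fixedF [set: 'I_M]%SET w sg' S' -> forall m, S m = S' m.
Proof.
move=> Hw Hs Hs' HF HF'.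
have HS := fixed_unit Hs HF; have HS' := fixed_unit Hs' HF'.
have used : forall n m, m \in route n -> S m = S' m.
  move=> n m hm; apply/eqP; apply/negPn/negP => hne.
  have := key_lt Hw HS HS' (ex_intro _ n (ex_intro _ m (conj hm hne))).
  suff : 0 <= \sum_m Dterm w S S' m by lra.
  by apply: sumr_ge0 => k _; apply: fixed_term Hw HS HS' _ HF HF'; rewrite inE.
move=> m; case: (pickP (fun n => m \in route n)) => [n hn|hno]; first exact: used hn.
have hno' : forall n, m \notin route n by move=> n; rewrite hno.
by rewrite HF HF' inE !unused_load.
Qed.

Definition upd (sg : 'I_M -> R) m0 (s : R) := fun k => if k == m0 then s else sg k.

Lemma upd_valid {sg : 'I_M -> R} (m0 : 'I_M) {s : R} : valids sg -> 0 < s <= 1 -> valids (upd sg m0 s).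
Proof. by move=> h hs k; rewrite /upd; case: ifP. Qed.

Lemma step_mono {F : {set 'I_M}} {m0 : 'I_M} {w : 'I_N -> R} {sg : 'I_M -> R} {s s' : R} {S S' : 'I_M -> R} : m0 \notin F -> validw w -> valids sg ->
  0 < s <= 1 -> 0 < s' <= 1 ->
  fixedF F w (upd sg m0 s) S -> fixedF F w (upd sg m0 s') S' -> s < s' ->
  s * Num.max (C m0) (load w S m0) < s' * Num.max (C m0) (load w S' m0).
Proof.
move=> m0F Hw Hs hs hs' HF HF' ss'.
have HS := fixed_unit (upd_valid m0 Hs hs) HF.
have HS' := fixed_unit (upd_valid m0 Hs hs') HF'.
have Sm0 : S m0 = s by rewrite HF (negbTE m0F) /upd eqxx.
have S'm0 : S' m0 = s' by rewrite HF' (negbTE m0F) /upd eqxx.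
have rest : 0 <= \sum_(m | m != m0) Dterm w S S' m.
  apply: sumr_ge0 => m hm; case: (boolP (m \in F)) => mF.
    exact: fixed_term Hw HS HS' mF HF HF'.
  have : S m = S' m by rewrite HF HF' (negbTE mF) /upd (negbTE hm).
  by rewrite /Dterm => ->; rewrite subrr mul0r.
have split : \sum_m Dterm w S S' m = Dterm w S S' m0 + \sum_(m | m != m0) Dterm w S S' m.
  by rewrite (bigD1 m0).
case/andP: hs => s0 s1; case/andP: hs' => t0 t1.
have lnlt : 0 < ln s' - ln s by rewrite subr_gt0 ltr_ln ?posrE.
set L := load w S m0; set L' := load w S' m0.
have L0 : 0 <= L by apply: load_ge0.
have L'0 : 0 <= L' by apply: load_ge0.
have c0 := Cpos m0.
have hmax' : s' * L' <= s' * Num.max (C m0) L' by rewrite ler_pM2l // le_max lexx orbT.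
have hmaxc : s' * C m0 <= s' * Num.max (C m0) L' by rewrite ler_pM2l // le_max lexx.
have [hL|hL] := leP L (C m0).
  apply: lt_le_trans hmaxc; by rewrite ltr_pM2r.
have [n hn] : exists n, m0 \in route n.
  case: (pickP (fun n => m0 \in route n)) => [n hn|hno]; first by exists n.
  have : L = 0 by rewrite /L unused_load // => n; rewrite hno.
  move=> h; rewrite h in hL; lra.
have hne : S m0 != S' m0 by rewrite Sm0 S'm0 lt_eqF.
have := key_lt Hw HS HS' (ex_intro _ n (ex_intro _ m0 (conj hn hne))).
rewrite split /Dterm Sm0 S'm0 -/L -/L' => hlt.
have : (ln s' - ln s) * (s * L - s' * L') < 0 by lra.
rewrite pmulr_rlt0 // subr_lt0 => h; lra.
Qed.

Lemma prod_lip {S S0 : 'I_M -> R} (l : seq 'I_M) {d : R} : unit01 S -> unit01 S0 ->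
  (forall k, `|S k - S0 k| <= d) ->
  `|\prod_(k <- l) S k - \prod_(k <- l) S0 k| <= (size l)%:R * d.
Proof.
move=> HS HS0 hd; elim: l => [|k l IH]; first by rewrite !big_nil subrr normr0 mul0r.
rewrite !big_cons /=.
have -> : S k * \prod_(j <- l) S j - S0 k * \prod_(j <- l) S0 j =
  (S k - S0 k) * \prod_(j <- l) S j + S0 k * (\prod_(j <- l) S j - \prod_(j <- l) S0 j) by ring.
apply: (le_trans (ler_normD _ _)); rewrite !normrM.
case/andP: (prod01 S l HS) => p0 p1; case/andP: (HS0 k) => q0 q1.
rewrite (gtr0_norm p0) (gtr0_norm q0).
have e1 : `|S k - S0 k| * \prod_(j <- l) S j <= d.
  apply: (le_trans (y := `|S k - S0 k|)); last exact: hd.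
  by rewrite ler_piMr.
have e2 : S0 k * `|\prod_(j <- l) S j - \prod_(j <- l) S0 j| <= (size l)%:R * d.
  apply: (le_trans (y := `|\prod_(j <- l) S j - \prod_(j <- l) S0 j|)) => //.
  by rewrite ler_piMl.
rewrite -addn1 natrD mulrDl mul1r addrC; exact: lerD.
Qed.

Definition Kc (w0 : 'I_N -> R) := \sum_n (1 + w0 n * (size (route n))%:R).

Lemma Kc_ge0 {w0} : validw w0 -> 0 <= Kc w0.
Proof. by move=> Hw; apply: sumr_ge0 => n _; rewrite addr_ge0 // mulr_ge0 // ltW. Qed.

Lemma load_lip (w w0 : 'I_N -> R) (S S0 : 'I_M -> R) (m : 'I_M) (d : R) :
  validw w0 -> unit01 S -> unit01 S0 -> 0 <= d ->
  (forall n, `|w n - w0 n| <= d) -> (forall k, `|S k - S0 k| <= d) ->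
  `|load w S m - load w0 S0 m| <= d * Kc w0.
Proof.
move=> Hw0 HS HS0 d0 hw hS; rewrite /load -sumrB /Kc mulr_sumr.
apply: (le_trans (ler_norm_sum _ _ _)).
apply: (le_trans (y := \sum_(n < N | m \in route n) d * (1 + w0 n * (size (route n))%:R))).
  apply: ler_sum => n _.
  have -> : w n * pp S n m - w0 n * pp S0 n m =
     (w n - w0 n) * pp S n m + w0 n * (pp S n m - pp S0 n m) by ring.
  apply: (le_trans (ler_normD _ _)); rewrite !normrM.
  case/andP: (pp01 n m HS) => p0 p1.
  rewrite (gtr0_norm p0) (gtr0_norm (Hw0 n)).
  have e1 : `|w n - w0 n| * pp S n m <= d.
    by apply: (le_trans (y := `|w n - w0 n|)); [rewrite ler_piMr | exact: hw].
  have e2 : w0 n * `|pp S n m - pp S0 n m| <= w0 n * ((size (route n))%:R * d).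
    apply: ler_wpM2l; first exact: ltW.
    rewrite /pp; apply: (le_trans (prod_lip (pre n m) HS HS0 hS)).
    rewrite ler_wpM2r // ler_nat /pre size_take; by case: ifP => // /ltnW.
  rewrite mulrDr mulr1; apply: lerD => //.
  have -> : d * (w0 n * (size (route n))%:R) = w0 n * ((size (route n))%:R * d) by ring.
  exact: e2.
rewrite [X in _ <= X](bigID (fun n => m \in route n)) /= lerDl.
apply: sumr_ge0 => n _; apply: mulr_ge0 => //.
by rewrite addr_ge0 // mulr_ge0 // ltW.
Qed.

Definition GenP (F : {set 'I_M}) : Prop :=
  exists sol : ('I_N -> R) -> ('I_M -> R) -> 'I_M -> R,
   (forall w sg, validw w -> valids sg -> fixedF F w sg (sol w sg)) /\
   (forall w0 sg0, validw w0 -> valids sg0 -> forall e, 0 < e -> exists2 d, 0 < d &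
     forall w sg, validw w -> valids sg -> (forall n, `|w n - w0 n| < d) ->
       (forall k, `|sg k - sg0 k| < d) ->
       forall m, `|sol w sg m - sol w0 sg0 m| < e).

Lemma gen0 : GenP finset.set0.
Proof.
exists (fun w sg => sg); split.
  by move=> w sg _ _ m; rewrite finset.in_set0.
move=> w0 sg0 _ _ e e0; exists e => // w sg _ _ _ hs m; exact: hs.
Qed.

Lemma clamp_lip (a t t0 : R) : a <= 1 ->
  `|Num.max a (Num.min 1 t) - Num.max a (Num.min 1 t0)| <= `|t - t0|.
Proof.
move=> a1.
have h1 : `|Num.min 1 t - Num.min 1 t0| <= `|t - t0|.
  have [h|h] := leP 1 t; have [h'|h'] := leP 1 t0.
  - by rewrite subrr normr0.
  - rewrite !ger0_norm; lra.
  - rewrite distrC (distrC t) !ger0_norm; lra.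
  - by [].
apply: le_trans h1; exact: maxrlip.
Qed.

Lemma clamp_in (a t : R) : a <= 1 -> a <= Num.max a (Num.min 1 t) <= 1.
Proof.
move=> a1; have [h|h] := leP (Num.min 1 t) a.
  by rewrite lexx.
by rewrite (ltW h) ge_min lexx.
Qed.

Lemma min_pos (a b : R) : 0 < a -> 0 < b -> 0 < Num.min a b.
Proof. by move=> *; rewrite lt_min; apply/andP. Qed.
Lemma lt_minP {a b x : R} : x < Num.min a b -> x < a /\ x < b.
Proof. by rewrite lt_min => /andP. Qed.

Section Step.
Variables (F : {set 'I_M}) (m0 : 'I_M).
Hypothesis m0F : m0 \notin F.
Variable sol' : ('I_N -> R) -> ('I_M -> R) -> 'I_M -> R.
Hypothesis Hfix' : forall w sg, validw w -> valids sg -> fixedF F w sg (sol' w sg).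
Hypothesis Hcont' : forall w0 sg0, validw w0 -> valids sg0 -> forall e, 0 < e -> exists2 d, 0 < d &
     forall w sg, validw w -> valids sg -> (forall n, `|w n - w0 n| < d) ->
       (forall k, `|sg k - sg0 k| < d) ->
       forall m, `|sol' w sg m - sol' w0 sg0 m| < e.

Definition Lf w sg s := load w (sol' w (upd sg m0 s)) m0.
Definition kf w sg s := s * Num.max (C m0) (Lf w sg s) - C m0.

Lemma sol'_unit {w sg s} : validw w -> valids sg -> 0 < s <= 1 -> unit01 (sol' w (upd sg m0 s)).
Proof. move=> Hw Hs hs; exact: fixed_unit (upd_valid m0 Hs hs) (Hfix' _ _ Hw (upd_valid m0 Hs hs)). Qed.

Lemma sol'_m0 {w sg s} : validw w -> valids sg -> 0 < s <= 1 -> sol' w (upd sg m0 s) m0 = s.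
Proof.
move=> Hw Hs hs; rewrite (Hfix' _ _ Hw (upd_valid m0 Hs hs)) (negbTE m0F) /upd eqxx //.
Qed.

Lemma Lf_bounds {w sg s} : validw w -> valids sg -> 0 < s <= 1 ->
  0 <= Lf w sg s <= \sum_n w n.
Proof.
move=> Hw Hs hs; have HS := sol'_unit Hw Hs hs.
by rewrite /Lf load_ge0 //= load_le.
Qed.

Lemma kf_mono {w sg s s'} : validw w -> valids sg -> 0 < s <= 1 -> 0 < s' <= 1 ->
  s < s' -> kf w sg s < kf w sg s'.
Proof.
move=> Hw Hs hs hs' ss'; rewrite /kf /Lf ltrD2r.
apply: (step_mono m0F Hw Hs hs hs' _ _ ss').
  exact: Hfix' _ _ Hw (upd_valid m0 Hs hs).
exact: Hfix' _ _ Hw (upd_valid m0 Hs hs').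
Qed.

Lemma kf_cont_s {w sg s0} : validw w -> valids sg -> 0 < s0 <= 1 ->
  forall e, 0 < e -> exists2 d, 0 < d & forall s, 0 < s <= 1 -> `|s - s0| < d ->
    `|kf w sg s - kf w sg s0| < e.
Proof.
move=> Hw Hs hs0 e e0.
set W := \sum_n w n.
have W0 : 0 <= W by apply: sumr_ge0 => n _; exact: ltW.
have c0 := Cpos m0.
have K0 := Kc_ge0 Hw.
set e1 := e / (2 * (Kc w + 1)).
have e10 : 0 < e1 by rewrite divr_gt0 // mulr_gt0 // ltr_wpDl.
have [d1 d10 hd1] := Hcont' _ _ Hw (upd_valid m0 Hs hs0) _ e10.
set d2 := e / (2 * (C m0 + W)).
have d20 : 0 < d2 by rewrite divr_gt0 // mulr_gt0 // ltr_wpDr.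
exists (Num.min d1 d2); first exact: min_pos.
move=> s hs /lt_minP [h1 h2].
have HS := sol'_unit Hw Hs hs; have HS0 := sol'_unit Hw Hs hs0.
have close : forall k, `|sol' w (upd sg m0 s) k - sol' w (upd sg m0 s0) k| < e1.
  apply: hd1 => //; first exact: upd_valid.
    by move=> n; rewrite subrr normr0.
  by move=> k; rewrite /upd; case: ifP => _ //; rewrite subrr normr0.
have hL : `|Lf w sg s - Lf w sg s0| <= e1 * Kc w.
  apply: load_lip => //; first exact: ltW.
    by move=> n; rewrite subrr normr0 ltW.
  by move=> k; apply: ltW.
have hLe : e1 * Kc w < e / 2.
  rewrite -subr_gt0 /e1.
  have -> : e / 2 - e / (2 * (Kc w + 1)) * Kc w = e / (2 * (Kc w + 1)).
    by field; rewrite gt_eqF // ltr_wpDl.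
  exact: e10.
have /andP[Lb0 Lb1] : 0 <= Lf w sg s <= W by apply: Lf_bounds.
have hmax : Num.max (C m0) (Lf w sg s) <= C m0 + W.
  by rewrite ge_max ler_wpDr //= (le_trans Lb1) // ler_wpDl // ltW.
have hmax0 : 0 <= Num.max (C m0) (Lf w sg s) by rewrite le_max ltW.
rewrite /kf.
have -> : s * Num.max (C m0) (Lf w sg s) - C m0 - (s0 * Num.max (C m0) (Lf w sg s0) - C m0) =
   (s - s0) * Num.max (C m0) (Lf w sg s) + s0 * (Num.max (C m0) (Lf w sg s) - Num.max (C m0) (Lf w sg s0)) by ring.
apply: (le_lt_trans (ler_normD _ _)); rewrite !normrM.
case/andP: hs0 => s00 s01.
rewrite (ger0_norm hmax0) (gtr0_norm s00).
have p1 : `|s - s0| * Num.max (C m0) (Lf w sg s) < e / 2.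
  apply: (le_lt_trans (y := `|s - s0| * (C m0 + W))); first by rewrite ler_wpM2l.
  have CW : 0 < C m0 + W by rewrite ltr_wpDr.
  rewrite -ltr_pdivlMr //; apply: (lt_le_trans h2); rewrite /d2.
  by rewrite invfM mulrA.
have p2 : s0 * `|Num.max (C m0) (Lf w sg s) - Num.max (C m0) (Lf w sg s0)| < e / 2.
  apply: (le_lt_trans _ hLe); apply: (le_trans _ hL).
  apply: (le_trans (y := `|Num.max (C m0) (Lf w sg s) - Num.max (C m0) (Lf w sg s0)|)).
    by rewrite ler_piMl.
  exact: maxrlip.
have -> : e = e / 2 + e / 2 by field.
exact: ltrD.
Qed.



Lemma kf_cont_p {w0 sg0 s} : validw w0 -> valids sg0 -> 0 < s <= 1 ->
  forall e, 0 < e -> exists2 d, 0 < d & forall w sg, validw w -> valids sg ->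
    (forall n, `|w n - w0 n| < d) -> (forall k, `|sg k - sg0 k| < d) ->
    `|kf w sg s - kf w0 sg0 s| < e.
Proof.
move=> Hw0 Hs0 hs e e0.
have K0 := Kc_ge0 Hw0.
set e1 := e / (Kc w0 + 1).
have e10 : 0 < e1 by rewrite divr_gt0 // ltr_wpDl.
have [d1 d10 hd1] := Hcont' _ _ Hw0 (upd_valid m0 Hs0 hs) _ e10.
exists (Num.min d1 e1); first exact: min_pos.
move=> w sg Hw Hs hw hsg.
have HS := sol'_unit Hw Hs hs; have HS0 := sol'_unit Hw0 Hs0 hs.
have close : forall k, `|sol' w (upd sg m0 s) k - sol' w0 (upd sg0 m0 s) k| < e1.
  apply: hd1 => //; first exact: upd_valid.
    by move=> n; case: (lt_minP (hw n)) => h _.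
  move=> k; rewrite /upd; case: ifP => _; first by rewrite subrr normr0.
  by case: (lt_minP (hsg k)) => h _.
have hL : `|Lf w sg s - Lf w0 sg0 s| <= e1 * Kc w0.
  apply: load_lip => //; first exact: ltW.
    by move=> n; case: (lt_minP (hw n)) => _ h; apply: ltW.
  by move=> k; apply: ltW.
have hLe : e1 * Kc w0 < e.
  rewrite -subr_gt0 /e1.
  have -> : e - e / (Kc w0 + 1) * Kc w0 = e / (Kc w0 + 1).
    by field; rewrite gt_eqF // ltr_wpDl.
  exact: e10.
rewrite /kf.
have -> : s * Num.max (C m0) (Lf w sg s) - C m0 - (s * Num.max (C m0) (Lf w0 sg0 s) - C m0) =
   s * (Num.max (C m0) (Lf w sg s) - Num.max (C m0) (Lf w0 sg0 s)) by ring.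
case/andP: hs => s0 s1.
rewrite normrM (gtr0_norm s0).
apply: (le_lt_trans _ hLe); apply: (le_trans _ hL).
apply: (le_trans (y := `|Num.max (C m0) (Lf w sg s) - Num.max (C m0) (Lf w0 sg0 s)|)).
  by rewrite ler_piMl.
exact: maxrlip.
Qed.

Lemma root_exists {w sg} : validw w -> valids sg -> exists s, 0 < s <= 1 /\ kf w sg s = 0.
Proof.
move=> Hw Hs.
set W := \sum_n w n.
have W0 : 0 <= W by apply: sumr_ge0 => n _; exact: ltW.
have c0 := Cpos m0.
set a := C m0 / (C m0 + W).
have CW : 0 < C m0 + W by rewrite ltr_wpDr.
have a0 : 0 < a by rewrite divr_gt0.
have a1 : a <= 1 by rewrite ler_pdivrMr // mul1r lerDl.
pose cl t := Num.max a (Num.min 1 t).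
have clin : forall t, 0 < cl t <= 1.
  move=> t; have /andP[h1 h2] := clamp_in a t a1.
  by rewrite (lt_le_trans a0 h1) h2.
pose g t := kf w sg (cl t).
have gcont : continuous g.
  move=> t0; apply/cvgrPdist_lt => e e0.
  have [d d0 hd] := kf_cont_s Hw Hs (clin t0) _ e0.
  apply/nbhs_ballP; exists d => // t /=; rewrite /ball /= => h.
  rewrite distrC; apply: hd; first exact: clin.
  apply: (le_lt_trans (clamp_lip _ _ _ a1)); by rewrite distrC.
have clx : forall x, a <= x -> x <= 1 -> cl x = x.
  move=> x ax x1; rewrite /cl.
  have -> : Num.min 1 x = x by rewrite /Num.min ltNge x1.
  exact: maxrr.
have cla : cl a = a by apply: clx.
have cl1 : cl 1 = 1 by apply: clx.
have ga : g a <= 0.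
  rewrite /g cla /kf subr_le0.
  have /andP[L0 LW] := Lf_bounds Hw Hs (clin a); rewrite cla in L0 LW.
  have hm : Num.max (C m0) (Lf w sg a) <= C m0 + W.
    by rewrite ge_max ler_wpDr //= (le_trans LW) // ler_wpDl // ltW.
  apply: (le_trans (y := a * (C m0 + W))); first by rewrite ler_wpM2l // ltW.
  by rewrite /a divfK // gt_eqF.
have g1 : 0 <= g 1.
  rewrite /g cl1 /kf mul1r subr_ge0 le_max lexx //.
have [c cin gc] : exists2 c, c \in `[a, 1] & g c = 0.
  apply: IVT => //; first exact: continuous_subspaceT.
  apply/andP; split.
    by rewrite ge_min ga.
  by rewrite le_max g1 orbT.
move: cin; rewrite in_itv /= => /andP[ca c1].
exists c; split; first by rewrite (lt_le_trans a0 ca) c1.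
by rewrite -gc /g clx.
Qed.



Lemma root_ex' w sg : exists s, validw w -> valids sg -> 0 < s <= 1 /\ kf w sg s = 0.
Proof.
case: (pselect (validw w /\ valids sg)) => [[Hw Hs]|h].
  by have [s hs] := root_exists Hw Hs; exists s.
by exists 0 => Hw Hs; exfalso; apply: h.
Qed.

Definition sstar w sg := projT1 (cid (root_ex' w sg)).

Lemma sstarP {w sg} : validw w -> valids sg -> 0 < sstar w sg <= 1 /\ kf w sg (sstar w sg) = 0.
Proof. exact: projT2 (cid (root_ex' w sg)). Qed.

Lemma root_lt {w sg s s1} : validw w -> valids sg -> 0 < s <= 1 -> 0 < s1 <= 1 ->
  kf w sg s = 0 -> kf w sg s1 < 0 -> s1 < s.
Proof.
move=> Hw Hs hs hs1 k0 k1; case: (ltP s1 s) => // h.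
move: h; rewrite le_eqVlt => /orP[/eqP e|h]; first by rewrite -e k0 ltxx in k1.
have := kf_mono Hw Hs hs hs1 h; lra.
Qed.

Lemma root_gt {w sg s s2} : validw w -> valids sg -> 0 < s <= 1 -> 0 < s2 <= 1 ->
  kf w sg s = 0 -> 0 < kf w sg s2 -> s < s2.
Proof.
move=> Hw Hs hs hs2 k0 k2; case: (ltP s s2) => // h.
move: h; rewrite le_eqVlt => /orP[/eqP e|h]; first by rewrite e k0 ltxx in k2.
have := kf_mono Hw Hs hs2 hs h; lra.
Qed.

Lemma sstar_cont {w0 sg0} : validw w0 -> valids sg0 ->
  forall e, 0 < e -> exists2 d, 0 < d & forall w sg, validw w -> valids sg ->
    (forall n, `|w n - w0 n| < d) -> (forall k, `|sg k - sg0 k| < d) ->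
    `|sstar w sg - sstar w0 sg0| < e.
Proof.
move=> Hw0 Hs0 e e0.
have [hs0 k0] := sstarP Hw0 Hs0; set s0 := sstar w0 sg0 in hs0 k0 *.
case/andP: (hs0) => s00 s01.
have [dl dl0 hdl] : exists2 dl, 0 < dl & forall w sg, validw w -> valids sg ->
    (forall n, `|w n - w0 n| < dl) -> (forall k, `|sg k - sg0 k| < dl) ->
    s0 - e < sstar w sg.
  case: (leP (s0 - e) 0) => h.
    exists 1 => // w sg Hw Hs _ _; have [/andP[h1 _] _] := sstarP Hw Hs.
    exact: le_lt_trans h h1.
  have hs1 : 0 < s0 - e <= 1 by rewrite h /=; lra.
  have kneg : kf w0 sg0 (s0 - e) < 0.
    rewrite -k0; apply: kf_mono => //; lra.
  have kneg' : 0 < - kf w0 sg0 (s0 - e) by rewrite oppr_gt0.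
  have [d d0 hd] := kf_cont_p Hw0 Hs0 hs1 _ kneg'.
  exists d => // w sg Hw Hs hw hsg.
  have [hs k] := sstarP Hw Hs.
  apply: (root_lt Hw Hs hs hs1 k).
  have := hd w sg Hw Hs hw hsg.
  move=> /(le_lt_trans (ler_norm _)) ; lra.
have [du du0 hdu] : exists2 du, 0 < du & forall w sg, validw w -> valids sg ->
    (forall n, `|w n - w0 n| < du) -> (forall k, `|sg k - sg0 k| < du) ->
    sstar w sg < s0 + e.
  case: (ltP 1 (s0 + e)) => h.
    exists 1 => // w sg Hw Hs _ _; have [/andP[_ h1] _] := sstarP Hw Hs.
    exact: le_lt_trans h1 h.
  have hs2 : 0 < s0 + e <= 1 by rewrite h andbT; lra.
  have kpos : 0 < kf w0 sg0 (s0 + e).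
    rewrite -k0; apply: kf_mono => //; lra.
  have [d d0 hd] := kf_cont_p Hw0 Hs0 hs2 _ kpos.
  exists d => // w sg Hw Hs hw hsg.
  have [hs k] := sstarP Hw Hs.
  apply: (root_gt Hw Hs hs hs2 k).
  have := hd w sg Hw Hs hw hsg.
  rewrite distrC => /(le_lt_trans (ler_norm _)) ; lra.
exists (Num.min dl du); first exact: min_pos.
move=> w sg Hw Hs hw hsg.
have h1 := hdl w sg Hw Hs (fun n => proj1 (lt_minP (hw n))) (fun k => proj1 (lt_minP (hsg k))).
have h2 := hdu w sg Hw Hs (fun n => proj2 (lt_minP (hw n))) (fun k => proj2 (lt_minP (hsg k))).
rewrite ltr_norml; apply/andP; split; lra.
Qed.

Definition solN w sg := sol' w (upd sg m0 (sstar w sg)).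

Lemma solN_fix w sg : validw w -> valids sg -> fixedF (m0 |: F) w sg (solN w sg).
Proof.
move=> Hw Hs; have [hs k] := sstarP Hw Hs.
have Hf := Hfix' _ _ Hw (upd_valid m0 Hs hs).
move=> m; rewrite /solN in_setU1.
case: (eqVneq m m0) => [->|hm] /=.
  rewrite sol'_m0 //.
  move: k; rewrite /kf /Lf => k.
  have mx : 0 < Num.max (C m0) (load w (sol' w (upd sg m0 (sstar w sg))) m0) by apply: maxc_gt0.
  rewrite /phi; apply: (mulIf (lt0r_neq0 mx)); rewrite divfK ?lt0r_neq0 //; lra.
rewrite Hf; case: ifP => // _; by rewrite /upd (negbTE hm).
Qed.

Lemma solN_cont w0 sg0 : validw w0 -> valids sg0 ->
  forall e, 0 < e -> exists2 d, 0 < d & forall w sg, validw w -> valids sg ->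
    (forall n, `|w n - w0 n| < d) -> (forall k, `|sg k - sg0 k| < d) ->
    forall m, `|solN w sg m - solN w0 sg0 m| < e.
Proof.
move=> Hw0 Hs0 e e0.
have [hs0 _] := sstarP Hw0 Hs0.
have [d1 d10 hd1] := Hcont' _ _ Hw0 (upd_valid m0 Hs0 hs0) _ e0.
have [d2 d20 hd2] := sstar_cont Hw0 Hs0 _ d10.
exists (Num.min d1 d2); first exact: min_pos.
move=> w sg Hw Hs hw hsg m.
have [hs _] := sstarP Hw Hs.
apply: hd1 => //; first exact: upd_valid.
  by move=> n; case: (lt_minP (hw n)).
move=> k; rewrite /upd; case: ifP => _.
  apply: hd2 => // n; [by case: (lt_minP (hw n)) | by case: (lt_minP (hsg n))].
by case: (lt_minP (hsg k)).
Qed.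

End Step.

Lemma gen_step (F : {set 'I_M}) (m0 : 'I_M) : m0 \notin F -> GenP F -> GenP (m0 |: F).
Proof.
move=> m0F [sol' [Hf Hc]].
exists (@solN F m0 sol' Hf Hc); split.
  by move=> w sg Hw Hs; apply: (@solN_fix F m0 m0F sol' Hf Hc).
by move=> w0 sg0 Hw0 Hs0; apply: (@solN_cont F m0 m0F sol' Hf Hc).
Qed.

Lemma gen_all (F : {set 'I_M}) : GenP F.
Proof.
have [n] := ubnP #|F|; elim: n F => // n IH F; rewrite ltnS => Fn.
case: (set_0Vmem F) => [->|[m0 m0F]]; first exact: gen0.
rewrite -(finset.setD1K m0F); apply: gen_step; first by rewrite !inE eqxx.
by apply: IH; move: Fn; rewrite (finset.cardsD1 m0 F) m0F add1n.
Qed.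

Definition rsol (ext : 'I_N -> R) (S : 'I_M -> R) (n : 'I_N) (m : 'I_M) : R :=
  if m \in route n then ext n * pp S n m else 0.

Lemma pp_nth0 (S : 'I_M -> R) n (x0 : 'I_M) : pp S n (nth x0 (route n) 0) = 1.
Proof.
case hs: (route n) => [|y l] /=; rewrite /pp /pre hs /= ?eqxx /= big_nil //.
Qed.

Lemma index_nth_r n (x0 : 'I_M) i : (i < size (route n))%N -> index (nth x0 (route n) i) (route n) = i.
Proof. by move=> hi; rewrite index_uniq. Qed.

Lemma pp_nthS (S : 'I_M -> R) n (x0 : 'I_M) i : (i.+1 < size (route n))%N ->
  pp S n (nth x0 (route n) i.+1) = pp S n (nth x0 (route n) i) * S (nth x0 (route n) i).
Proof.
move=> hi; have hi' : (i < size (route n))%N by apply: ltnW.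
rewrite /pp /pre !index_nth_r // (take_nth x0 hi') -cats1 big_cat big_seq1 //.
Qed.

Lemma prev_nth0 n (x0 : 'I_M) : (0 < size (route n))%N ->
  prev_node route n (nth x0 (route n) 0) = None.
Proof. by move=> h; rewrite /prev_node index_nth_r. Qed.

Lemma prev_nthS n (x0 : 'I_M) i : (i.+1 < size (route n))%N ->
  prev_node route n (nth x0 (route n) i.+1) = Some (nth x0 (route n) i).
Proof.
move=> h; rewrite /prev_node index_nth_r //; congr Some.
by apply: set_nth_default; apply: ltnW.
Qed.

Lemma rsol_rhs (ext : 'I_N -> R) (S : 'I_M -> R) n m :
  flow_rhs route ext (rsol ext S) S n m = rsol ext S n m.
Proof.
rewrite /flow_rhs /rsol; case hm: (m \in route n) => //.
have hi : (index m (route n) < size (route n))%N by rewrite index_mem.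
have em : m = nth m (route n) (index m (route n)) by rewrite nth_index.
case hix: (index m (route n)) => [|i].
  rewrite {1 2}em hix prev_nth0 ?(leq_ltn_trans _ hi) //.
  by rewrite em hix pp_nth0 mulr1.
rewrite hix in hi.
rewrite {1}em hix prev_nthS // mem_nth ?(ltn_trans _ hi) //.
by rewrite {3}em hix pp_nthS // mulrA.
Qed.

Definition wJ (J : 'I_N -> nat) (rn rhon : 'I_N -> R) : 'I_N -> R :=
  fun n => (J n)%:R * rn n + rhon n.

Lemma Sfac_rsol (J : 'I_N -> nat) (rn rhon : 'I_N -> R) (S : 'I_M -> R) m :
  Sfac C route J (rsol rn S) (rsol rhon S) m = phi (C m) (load (wJ J rn rhon) S m).
Proof.
rewrite /Sfac /phi /load; congr (_ / Num.max _ _).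
by apply: eq_bigr => n hn; rewrite /rsol hn /wJ; ring.
Qed.

Lemma sol_exists (J : 'I_N -> nat) (rn rhon : 'I_N -> R) (S : 'I_M -> R) :
  fixedF [set: 'I_M]%SET (wJ J rn rhon) (fun _ => 1) S ->
  is_solution C route J rn rhon (rsol rn S) (rsol rhon S).
Proof.
move=> HF.
have eS : Sfac C route J (rsol rn S) (rsol rhon S) = S.
  by apply/funext => m; rewrite Sfac_rsol HF inE.
by move=> n m; rewrite eS !rsol_rhs.
Qed.

Lemma sol_shape (J : 'I_N -> nat) (rn rhon : 'I_N -> R) (r rho : 'I_N -> 'I_M -> R) :
  is_solution C route J rn rhon r rho ->
  forall n m, r n m = rsol rn (Sfac C route J r rho) n m /\
              rho n m = rsol rhon (Sfac C route J r rho) n m.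
Proof.
move=> Hsol n; set S := Sfac C route J r rho.
have hpos : forall i x0, (i < size (route n))%N ->
    r n (nth x0 (route n) i) = rn n * pp S n (nth x0 (route n) i) /\
    rho n (nth x0 (route n) i) = rhon n * pp S n (nth x0 (route n) i).
  elim=> [|i IH] x0 hi.
    have [h1 h2] := Hsol n (nth x0 (route n) 0).
    rewrite h1 h2 /flow_rhs mem_nth // prev_nth0 // pp_nth0 !mulr1 //.
  have [h1 h2] := Hsol n (nth x0 (route n) i.+1).
  have [IH1 IH2] := IH x0 (ltnW hi).
  rewrite h1 h2 /flow_rhs mem_nth // prev_nthS // IH1 IH2 pp_nthS // !mulrA //.
move=> m; rewrite /rsol; case hm: (m \in route n).
  have hi : (index m (route n) < size (route n))%N by rewrite index_mem.
  have := hpos _ m hi; rewrite nth_index //.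
have [h1 h2] := Hsol n m; by rewrite h1 h2 /flow_rhs hm.
Qed.
End Net.

Theorem mainTheorem2 (R : realType) (M N : nat) (C : 'I_M -> R)
  (route : 'I_N -> seq 'I_M) (J : 'I_N -> nat) :
  (forall m, 0 < C m) ->
  (forall n, uniq (route n)) ->
  exists sol : ('I_N -> R) -> ('I_N -> R) ->
               (('I_N -> 'I_M -> R) * ('I_N -> 'I_M -> R)),
    (* existence and uniqueness for all positive parameters *)
    (forall rn rhon : 'I_N -> R,
       (forall n, 0 < rn n) -> (forall n, 0 < rhon n) ->
       is_solution C route J rn rhon (sol rn rhon).1 (sol rn rhon).2 /\
       (forall r rho, is_solution C route J rn rhon r rho ->
          forall n m, r n m = (sol rn rhon).1 n m /\
                      rho n m = (sol rn rhon).2 n m)) /\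
    (* continuity in (rn, rhon) on the positive parameter domain *)
    (forall rn0 rhon0 : 'I_N -> R,
       (forall n, 0 < rn0 n) -> (forall n, 0 < rhon0 n) ->
       forall eps : R, 0 < eps -> exists2 delta : R, 0 < delta &
         forall rn rhon : 'I_N -> R,
           (forall n, 0 < rn n) -> (forall n, 0 < rhon n) ->
           (forall n, `|rn n - rn0 n| < delta /\ `|rhon n - rhon0 n| < delta) ->
           forall n m,
             `|(sol rn rhon).1 n m - (sol rn0 rhon0).1 n m| < eps /\
             `|(sol rn rhon).2 n m - (sol rn0 rhon0).2 n m| < eps).
Proof.
move=> Cpos Huniq.
have [solS [Hfix Hcont]] := gen_all _ _ _ C route Cpos Huniq [set: 'I_M]%SET.
pose one := (fun _ : 'I_M => (1 : R)).
have one_v : valids _ _ one by move=> m; rewrite ltr01 lexx.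
have wJ_v : forall rn rhon : 'I_N -> R, (forall n, 0 < rn n) -> (forall n, 0 < rhon n) -> validw _ _ (wJ _ _ J rn rhon).
  move=> rn rhon h1 h2 n; rewrite /wJ /=; apply: ltr_wpDl; last exact: h2.
  by apply: mulr_ge0 => //; exact: ltW.
exists (fun rn rhon => (rsol _ _ _ route rn (solS (wJ _ _ J rn rhon) one),
                        rsol _ _ _ route rhon (solS (wJ _ _ J rn rhon) one))).
split.
  move=> rn rhon hrn hrhon /=.
  have Hw := wJ_v _ _ hrn hrhon.
  have HF := Hfix _ _ Hw one_v.
  split; first exact: (sol_exists _ _ _ C route Huniq).
  move=> r rho Hsol n m.
  have [e1 e2] := sol_shape _ _ _ C route Huniq _ _ _ _ _ Hsol n m.
  pose S' := Sfac C route J r rho.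
  have er : r = rsol _ _ _ route rn S'.
    by apply/funext => n'; apply/funext => m'; case: (sol_shape _ _ _ C route Huniq _ _ _ _ _ Hsol n' m').
  have erho : rho = rsol _ _ _ route rhon S'.
    by apply/funext => n'; apply/funext => m'; case: (sol_shape _ _ _ C route Huniq _ _ _ _ _ Hsol n' m').
  have HF' : fixedF _ _ _ C route [set: 'I_M]%SET (wJ _ _ J rn rhon) one S'.
    move=> k; rewrite inE.
    by rewrite -(Sfac_rsol _ _ _ C route J rn rhon S' k) -er -erho.
  have eS : S' = solS (wJ _ _ J rn rhon) one.
    by apply/funext => k; apply: (fixed_unique _ _ _ C route Cpos Huniq _ _ _ _ _ Hw one_v one_v HF' HF).
  by rewrite e1 e2 -/S' eS.
move=> rn0 rhon0 hrn0 hrhon0 eps eps0 /=.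
have Hw0 := wJ_v _ _ hrn0 hrhon0.
set w0 := wJ _ _ J rn0 rhon0 in Hw0 *.
set B := \sum_n (rn0 n + rhon0 n) * (size (route n))%:R + 1.
have Bge : forall n, (rn0 n + rhon0 n) * (size (route n))%:R <= B.
  move=> n; rewrite /B (bigD1 n) //= -addrA lerDl addr_ge0 //.
  by apply: sumr_ge0 => k _; rewrite mulr_ge0 // addr_ge0 // ltW.
have B0 : 0 < B.
  by rewrite /B ltr_wpDl // sumr_ge0 // => k _; rewrite mulr_ge0 // addr_ge0 // ltW.
set Jb := \sum_n (J n)%:R + 1 : R.
have Jge : forall n, (J n)%:R + 1 <= Jb.
  by move=> n; rewrite /Jb lerD2r (bigD1 n) //= lerDl sumr_ge0.
have Jb0 : 0 < Jb by rewrite /Jb ltr_wpDl // sumr_ge0.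
set e1 := eps / (2 * B).
have e10 : 0 < e1 by rewrite divr_gt0 // mulr_gt0.
have [d1 d10 hd1] := Hcont _ _ Hw0 one_v _ e10.
exists (Num.min (d1 / Jb) (eps / 2)).
  by apply: min_pos; rewrite divr_gt0.
move=> rn rhon hrn hrhon hcl.
have Hw := wJ_v _ _ hrn hrhon.
have hw : forall n, `|wJ _ _ J rn rhon n - w0 n| < d1.
  move=> n; have [h1 h2] := hcl n.
  have [h1a _] := lt_minP _ h1; have [h2a _] := lt_minP _ h2.
  rewrite /w0 /wJ.
  have -> : (J n)%:R * rn n + rhon n - ((J n)%:R * rn0 n + rhon0 n) =
            (J n)%:R * (rn n - rn0 n) + (rhon n - rhon0 n) by ring.
  apply: (le_lt_trans (ler_normD _ _)); rewrite normrM ger0_norm //.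
  have hJ : (J n)%:R * `|rn n - rn0 n| <= (J n)%:R * (d1 / Jb) by rewrite ler_wpM2l // ltW.
  have : (J n)%:R * (d1 / Jb) + d1 / Jb <= d1.
    rewrite -[X in _ + X]mul1r -mulrDl -ler_pdivlMr ?divr_gt0 //.
    by rewrite invf_div mulrCA divff ?gt_eqF // mulr1.
  lra.
have hS : forall k, `|solS (wJ _ _ J rn rhon) one k - solS w0 one k| < e1.
  by apply: hd1 => // k; rewrite subrr normr0.
have HS := fixed_unit _ _ _ C route Cpos one_v (Hfix _ _ Hw one_v).
have HS0 := fixed_unit _ _ _ C route Cpos one_v (Hfix _ _ Hw0 one_v).
set S := solS (wJ _ _ J rn rhon) one in hS HS *.
set S0 := solS w0 one in hS HS0 *.
have gen : forall (x x0 : 'I_N -> R) n m, 0 < x0 n ->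
    x0 n * (size (route n))%:R <= B -> `|x n - x0 n| < eps / 2 ->
    `|x n * pp _ _ _ route S n m - x0 n * pp _ _ _ route S0 n m| < eps.
  move=> x x0 n m x00 xB hx.
  have -> : x n * pp _ _ _ route S n m - x0 n * pp _ _ _ route S0 n m =
    (x n - x0 n) * pp _ _ _ route S n m + x0 n * (pp _ _ _ route S n m - pp _ _ _ route S0 n m) by ring.
  apply: (le_lt_trans (ler_normD _ _)); rewrite !normrM.
  have /andP[p0 p1] := pp01 _ _ _ route n m HS.
  rewrite (gtr0_norm p0) (gtr0_norm x00).
  have t1 : `|x n - x0 n| * pp _ _ _ route S n m < eps / 2.
    by apply: (le_lt_trans _ hx); rewrite ler_piMr.
  have t2 : x0 n * `|pp _ _ _ route S n m - pp _ _ _ route S0 n m| <= eps / 2.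
    have hp : `|pp _ _ _ route S n m - pp _ _ _ route S0 n m| <= (size (route n))%:R * e1.
      rewrite /pp; apply: (le_trans (prod_lip _ _ _ HS HS0 (fun k => ltW (hS k)))).
      apply: ler_wpM2r; first exact: ltW.
      rewrite ler_nat /pre size_take; by case: ifP => // /ltnW.
    apply: (le_trans (y := x0 n * ((size (route n))%:R * e1))); first by rewrite ler_wpM2l // ltW.
    rewrite mulrA; apply: (le_trans (y := B * e1)); first by rewrite ler_wpM2r // ltW.
    have hBe : B * e1 = eps / 2 by rewrite /e1; field; rewrite gt_eqF.
    by rewrite hBe.
  have -> : eps = eps / 2 + eps / 2 by field.
  by apply: ltr_leD.
move=> n m; rewrite /rsol; case: (m \in route n); last by rewrite subrr normr0.
have [h1 h2] := hcl n.
have [_ h1b] := lt_minP _ h1; have [_ h2b] := lt_minP _ h2.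
split; apply: gen => //.
- apply: le_trans (Bge n); rewrite ler_wpM2r // lerDl ltW //.
- apply: le_trans (Bge n); rewrite ler_wpM2r // lerDr ltW //.
Qed.
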